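(* Let $p$ be a prime, $n=rk$, let $h:\mathbb{F}_{p^k}\to\mathbb{F}_{p^k}$ be an arbitrary mapping, and let $\gamma\in\mathbb{F}_{p^n}^*$ be an $(i,b)$-Frobenius translator of $f:\mathbb{F}_{p^n}\to\mathbb{F}_{p^k}$ (with $b\in\mathbb{F}_{p^k}$, $i\in\{0,\dots,k-1\}$). Let $L:\mathbb{F}_{p^n}\to\mathbb{F}_{p^n}$ be an $\mathbb{F}_{p^k}$-linear permutation. Then the mapping $$G(x)=L(x)^{p^i}+L(\gamma)^{p^i}\,h(f(x))$$ permutes $\mathbb{F}_{p^n}$ if and only if the mapping $g(u)=u+bh(u)$ permutes $\mathbb{F}_{p^k}$.
   Context: For $n=rk$, a function $f:\mathbb{F}_{p^n}\to\mathbb{F}_{p^k}$, an element $\gamma\in\mathbb{F}_{p^n}^*$, an element $b\in\mathbb{F}_{p^k}$ and $i\in\{0,\dots,k-1\}$, $\gamma$ is called an $(i,b)$-Frobenius translator of $f$ if $f(x+u\gamma)-f(x)=u^{p^i}b$ for all $x\in\mathbb{F}_{p^n}$ and all $u\in\mathbb{F}_{p^k}$. An $\mathbb{F}_{p^k}$-linear function on $\mathbb{F}_{p^n}$ is one of the form $L(x)=\sum_{j=0}^{r-1}\lambda_j x^{p^{kj}}$ with $\lambda_j\in\mathbb{F}_{p^n}$. *)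

(* Defs.v *)
From HB Require Import structures.
From mathcomp Require Import all_boot all_order all_algebra all_field.
Set Implicit Arguments. Unset Strict Implicit. Unset Printing Implicit Defensive.
Import GRing.Theory.
Local Open Scope ring_scope.

(* F plays the role of F_{p^n}; the subfield F_{p^k} is realized as the set of
   fixed points of x |-> x^(p^k) inside F (when k | n this is exactly the
   unique subfield of order p^k). *)
Definition subF (F : finFieldType) (p k : nat) : pred F :=
  [pred x : F | x ^+ (p ^ k) == x].

Definition frobenius_translator (F : finFieldType) (p k : nat)
  (f : F -> F) (gamma b : F) (i : nat) : Prop :=
  gamma != 0 /\ b \in subF p k /\ (i < k)%N /\
  forall (x u : F), u \in subF p k ->
    f (x + u * gamma) - f x = u ^+ (p ^ i) * b.

Definition Fpk_linear (F : finFieldType) (p k r : nat) (L : F -> F) : Prop :=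
  exists lambda : 'I_r -> F,
    forall x : F, L x = \sum_(j < r) lambda j * x ^+ (p ^ (k * j)).

(* g permutes the subset A: maps A into A and is injective on A
   (equivalently bijective on the finite set A). *)
Definition permutes_on (F : finFieldType) (A : pred F) (g : F -> F) : Prop :=
  (forall u, u \in A -> g u \in A) /\ {in A &, injective g}.

(* Main.v *)
Require Import Defs.
From HB Require Import structures.
From mathcomp Require Import all_boot all_order all_algebra all_field.
From mathcomp Require Import ring.
Import GRing.Theory.
Local Open Scope ring_scope.

Lemma pnat_pow (F : finFieldType) (p m : nat) : p \in [pchar F] -> ([pchar F]).-nat (p ^ m)%N.
Proof. move=> hc; rewrite (eq_pnat _ (pcharf_eq hc)) pnatX pnat_id ?(pcharf_prime hc) //. Qed.

Lemma frobD (F : finFieldType) (p m : nat) (x y : F) : p \in [pchar F] ->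
  (x + y) ^+ (p ^ m) = x ^+ (p ^ m) + y ^+ (p ^ m).
Proof. move=> hc; apply: exprDn_pchar; exact: pnat_pow. Qed.

Lemma frobN (F : finFieldType) (p m : nat) (x : F) : p \in [pchar F] ->
  (- x) ^+ (p ^ m) = - x ^+ (p ^ m).
Proof. move=> hc; apply: exprNn_pchar; exact: pnat_pow. Qed.

Lemma frobB (F : finFieldType) (p m : nat) (x y : F) : p \in [pchar F] ->
  (x - y) ^+ (p ^ m) = x ^+ (p ^ m) - y ^+ (p ^ m).
Proof. by move=> hc; rewrite frobD // frobN. Qed.

Lemma frob_inj (F : finFieldType) (p m : nat) : p \in [pchar F] ->
  injective (fun x : F => x ^+ (p ^ m)).
Proof.
move=> hc x y /= e; apply/eqP; rewrite -subr_eq0.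
have := eqxx ((x - y) ^+ (p ^ m)); rewrite {2}frobB // e subrr expf_eq0.
by case/andP.
Qed.

Lemma subFD (F : finFieldType) (p k : nat) (x y : F) : p \in [pchar F] ->
  x \in subF p k -> y \in subF p k -> x + y \in subF p k.
Proof. by move=> hc; rewrite !inE => /eqP hx /eqP hy; rewrite frobD // hx hy. Qed.

Lemma subFB (F : finFieldType) (p k : nat) (x y : F) : p \in [pchar F] ->
  x \in subF p k -> y \in subF p k -> x - y \in subF p k.
Proof. by move=> hc; rewrite !inE => /eqP hx /eqP hy; rewrite frobB // hx hy. Qed.

Lemma subFM (F : finFieldType) (p k : nat) (x y : F) :
  x \in subF p k -> y \in subF p k -> x * y \in subF p k.
Proof. by rewrite !inE => /eqP hx /eqP hy; rewrite exprMn hx hy. Qed.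

Lemma subF0 (F : finFieldType) (p k : nat) : p \in [pchar F] -> (0 : F) \in subF p k.
Proof. move=> hc; have := prime_gt0 (pcharf_prime hc).
by case: p hc => // p' _ _; rewrite inE expr0n expn_eq0. Qed.

Lemma subF_pow (F : finFieldType) (p k j : nat) (u : F) :
  u \in subF p k -> u ^+ (p ^ (k * j)) = u.
Proof.
rewrite inE => /eqP hu; elim: j => [|j IH]; first by rewrite muln0 expn0 expr1.
by rewrite mulnS expnD exprM hu IH.
Qed.

Lemma subF_root (F : finFieldType) (p k i : nat) (v : F) : p \in [pchar F] ->
  v \in subF p k -> exists2 u, u \in subF p k & u ^+ (p ^ i) = v.
Proof.
move=> hc hv; have [g gK Kg] := injF_bij (frob_inj F p i hc).
exists (g v); last exact: Kg.
rewrite inE; apply/eqP; apply: (frob_inj F p i hc) => /=.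
by rewrite -exprM mulnC exprM Kg; move: hv; rewrite inE => /eqP.
Qed.

Lemma Llin (F : finFieldType) (p k r : nat) (L : F -> F) (x y u : F) :
  p \in [pchar F] -> Fpk_linear p k r L -> u \in subF p k ->
  L (x + u * y) = L x + u * L y.
Proof.
move=> hc [lam hL] hu; rewrite !hL mulr_sumr -big_split /=; apply: eq_bigr => j _.
rewrite frobD // exprMn (subF_pow _ _ _ _ _ hu).
ring.
Qed.

Theorem theorem3 (p k r : nat) (F : finFieldType)
  (hp : prime p) (hk : (0 < k)%N) (hr : (0 < r)%N)
  (hchar : p \in [pchar F]) (hcard : #|F| = (p ^ (r * k))%N)
  (f h L : F -> F) (gamma b : F) (i : nat)
  (hf : forall x : F, f x \in subF p k)
  (hh : forall u : F, u \in subF p k -> h u \in subF p k)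
  (htr : frobenius_translator p k f gamma b i)
  (hLlin : Fpk_linear p k r L) (hLperm : bijective L) :
  bijective (fun x : F => L x ^+ (p ^ i) + L gamma ^+ (p ^ i) * h (f x))
  <-> permutes_on (subF p k) (fun u : F => u + b * h u).
Proof.
case: htr => [g0 [bS [_ htr]]].
have Linj := bij_inj hLperm.
have Fi := frob_inj F p i hchar.
split.
- move=> /bij_inj Ginj; split.
    by move=> u uS; apply: subFD => //; apply: subFM => //; apply: hh.
  move=> u1 u2 u1S u2S /= e.
  case: (eqVneq b 0) => [b0|bn0].
    by move: e; rewrite b0 !mul0r !addr0.
  have vS : (u2 - u1) / b \in subF p k.
    apply: subFM; first exact: subFB.
    by move: bS; rewrite !inE => /eqP bq; rewrite exprVn bq.
  have [u uS uq] := subF_root F p k i _ hchar vS.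
  have w1S : (u1 - f 0) / b \in subF p k.
    apply: subFM; first exact: subFB.
    by move: bS; rewrite !inE => /eqP bq; rewrite exprVn bq.
  have [w wS wq] := subF_root F p k i _ hchar w1S.
  have fx : f (w * gamma) = u1.
    have := htr 0 w wS; rewrite add0r wq => /eqP; rewrite subr_eq => /eqP ->.
    by rewrite mulfVK // subrK.
  have fxu : f (w * gamma + u * gamma) = u2.
    have := htr (w * gamma) u uS; rewrite uq fx => /eqP; rewrite subr_eq => /eqP ->.
    by rewrite mulfVK // subrK.
  have vh : (u2 - u1) / b = h u1 - h u2.
    apply: (mulIf bn0); rewrite mulfVK //.
    apply/eqP; rewrite -subr_eq0; apply/eqP.
    transitivity (u2 + b * h u2 - (u1 + b * h u1)); first ring.
    by rewrite e subrr.
  have := Ginj (w * gamma + u * gamma) (w * gamma).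
  rewrite fxu fx (Llin _ _ _ _ _ _ _ _ hchar hLlin uS) frobD // exprMn uq vh => H.
  have E : w*gamma + u*gamma = w*gamma by apply: H; ring.
  move/eqP: E; rewrite -subr_eq0 addrAC subrr add0r mulf_eq0 (negbTE g0) orbF => /eqP u0.
  have : (u2 - u1) / b = 0 by rewrite -uq u0 expr0n gtn_eqF // expn_gt0 prime_gt0.
  by move/eqP; rewrite mulf_eq0 invr_eq0 (negbTE bn0) orbF subr_eq0 => /eqP ->.
- move=> [gS ginj]; apply: injF_bij => x y /= e.
  pose c := h (f y) - h (f x).
  have cS : c \in subF p k by apply: subFB => //; apply: hh.
  have eq1 : L x ^+ (p ^ i) = L y ^+ (p ^ i) + L gamma ^+ (p ^ i) * c.
    apply/eqP; rewrite -subr_eq0; apply/eqP.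
    transitivity ((L x ^+ (p ^ i) + L gamma ^+ (p ^ i) * h (f x))
       - (L y ^+ (p ^ i) + L gamma ^+ (p ^ i) * h (f y))); first by rewrite /c; ring.
    by rewrite e subrr.
  have [c' c'S c'q] := subF_root F p k i _ hchar cS.
  have xe : x = y + c' * gamma.
    apply: Linj; apply: Fi => /=.
    by rewrite (Llin _ _ _ _ _ _ _ _ hchar hLlin c'S) frobD // exprMn c'q eq1 mulrC.
  have fx : f x = f y + c * b.
    have := htr y c' c'S; rewrite -xe c'q => /eqP; rewrite subr_eq => /eqP ->.
    by rewrite addrC.
  have cdef : c = h (f y) - h (f y + c * b) by rewrite {1}/c fx.
  have fyS := hf y.
  have cbS : f y + c * b \in subF p k by apply: subFD => //; apply: subFM.
  have ge : f y + c * b + b * h (f y + c * b) = f y + b * h (f y).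
    rewrite {1}cdef; ring.
  have /eqP := ginj _ _ cbS fyS ge.
  rewrite -subr_eq0 addrAC subrr add0r mulf_eq0 => cb0.
  have c0 : c = 0.
    case/orP: cb0 => [/eqP //|/eqP b0].
    by rewrite cdef b0 mulr0 addr0 subrr.
  by apply: Linj; apply: Fi; rewrite /= eq1 c0 mulr0 addr0.
Qed.
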